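(* Let $H$ denote the Hilbert transform on $\mathbb{R}$ normalized so that $H(\chi_{(0,1)})(y)=\log\frac{|y|}{|y-1|}$, and let $H^{*}g(x)=\sup_{\epsilon>0}\big|\int_{|x-y|>\epsilon}\frac{g(y)}{x-y}\,dy\big|$ be the associated maximal operator (same normalization). Let $f=\chi_{(0,1)}$. Then there exist constants $m>1$ and $C>0$ such that $$H^{*}(Hf)(x)\ge C\,\frac{\log x}{x}\qquad\text{for all }x>m.$$ *)

(* Defs.v *)
From Stdlib Require Import Reals.
Open Scope R_scope.

Definition clampR (N t : R) : R := Rmax (- N) (Rmin N t).

(* Lebesgue integral over the whole real line, for absolutely integrable
   functions h whose bounded truncations are Riemann integrable on compacts:
   line_int h L  <->  lim_{N -> oo} \int_{-N}^{N} clamp_N (h y) dy = L.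
   (By monotone/dominated convergence this coincides with the Lebesgue
   integral of h whenever h is absolutely integrable.) *)
Definition line_int (h : R -> R) (L : R) : Prop :=
  exists N0 : nat,
    (forall N : nat, (N0 <= N)%nat ->
       inhabited (Riemann_integrable (fun y => clampR (INR N) (h y)) (- INR N) (INR N))) /\
    (forall eta : R, 0 < eta -> exists N1 : nat, forall N : nat, (N1 <= N)%nat ->
       forall pr : Riemann_integrable (fun y => clampR (INR N) (h y)) (- INR N) (INR N),
         Rabs (RiemannInt pr - L) < eta).

(* Integrand of the truncated Hilbert transform at x with truncation eps:
   y |-> 1_{|x-y|>eps} g(y)/(x-y)   (kernel 1/(x-y), no factor 1/pi). *)
Definition trunc_kernel (g : R -> R) (x eps : R) (y : R) : R :=
  if Rle_dec (Rabs (x - y)) eps then 0 else g y / (x - y).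

(* Maximal Hilbert transform lower bound:
   Hstar_ge g x c  <->  H* g (x) = sup_{eps>0} |\int_{|x-y|>eps} g(y)/(x-y) dy| >= c,
   phrased as "every upper bound of the set of these values is >= c". *)
Definition Hstar_ge (g : R -> R) (x c : R) : Prop :=
  forall M : R,
    (forall eps I : R, 0 < eps -> line_int (trunc_kernel g x eps) I -> Rabs I <= M) ->
    c <= M.

(* H(chi_(0,1)) with the normalization of the paper:
   H(chi_(0,1))(y) = log (|y| / |y-1|)  (a.e.; values at y = 0, 1 irrelevant). *)
Definition H_chi01 (y : R) : R := ln (Rabs y / Rabs (y - 1)).

(* Main.v *)
Require Import Defs.
From Stdlib Require Import Reals Lra Lia.
From Coquelicot Require Import Coquelicot.
Open Scope R_scope.

Lemma ln_le_sub1 z : 0 < z -> ln z <= z - 1.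
Proof.
  intros hz. destruct (Req_dec z 1) as [->|hne].
  - rewrite ln_1; lra.
  - assert (H := exp_ineq1 (z - 1) ltac:(lra)).
    left. rewrite <- (ln_exp (z-1)). apply ln_increasing; lra.
Qed.

Lemma ln_ge_1 z : 0 < z -> 1 - / z <= ln z.
Proof.
  intros hz. assert (H := ln_le_sub1 (/ z) (Rinv_0_lt_compat _ hz)).
  rewrite ln_Rinv in H by lra. lra.
Qed.

Lemma div_ge a L d : 0 < d -> a * d <= L -> a <= L / d.
Proof. intros hd h. apply Rmult_le_reg_r with d; auto.
  replace (L / d * d) with L by (field; lra). lra. Qed.
Lemma div_le a L d : 0 < d -> L <= a * d -> L / d <= a.
Proof. intros hd h. apply Rmult_le_reg_r with d; auto.
  replace (L / d * d) with L by (field; lra). lra. Qed.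

Definition g1 x y := ln (- y / (1 - y)) / (x - y).
Definition g2 x y := ln (y / (y - 1)) / (x - y).

Lemma B1a x y : 1 < x -> y <= -1 -> -1/(y*y) <= g1 x y.
Proof.
  intros hx hy. unfold g1.
  assert (hz : 0 < -y/(1-y)) by (apply Rdiv_lt_0_compat; lra).
  assert (H := ln_ge_1 _ hz).
  replace (1 - / (- y / (1 - y))) with (1/y) in H by (field; lra).
  apply div_ge; [lra|].
  assert (-1 / (y*y) * (x - y) <= 1/y); [|lra].
  replace (-1 / (y*y) * (x - y)) with (1/y - x/(y*y)) by (field; lra).
  assert (0 <= x/(y*y)); [|lra].
  apply Rdiv_le_0_compat; nra.
Qed.

Lemma B1b x y : 1 < x -> y <= -1 -> g1 x y <= - / ((1-y)*(x-y)).
Proof.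
  intros hx hy. unfold g1.
  assert (hz : 0 < -y/(1-y)) by (apply Rdiv_lt_0_compat; lra).
  assert (H := ln_le_sub1 _ hz).
  replace (- y / (1 - y) - 1) with (-/(1-y)) in H by (field; lra).
  apply div_le; [lra|].
  replace (- / ((1 - y) * (x - y)) * (x - y)) with (-/(1-y)) by (field; lra). lra.
Qed.

Lemma B1c x y : 1 < x -> -x <= y <= -1 -> g1 x y <= / (4*x*y).
Proof.
  intros hx hy. eapply Rle_trans; [apply B1b; lra|].
  assert (/ ((1 - y) * (x - y)) >= - / (4*x*y)); [|lra].
  replace (- / (4*x*y)) with (/ (4*x*(-y))) by (field; lra).
  apply Rle_ge, Rinv_le_contravar; nra.
Qed.

Lemma B1d x y : 1 < x -> y <= -1 -> g1 x y <= 0.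
Proof.
  intros hx hy. eapply Rle_trans; [apply B1b; lra|].
  assert (0 < / ((1 - y) * (x - y))); [|lra].
  apply Rinv_0_lt_compat; nra.
Qed.

Lemma B2a x y : 1 < x -> 2*x+1 <= y -> -2/((y-1)*(y-1)) <= g2 x y.
Proof.
  intros hx hy. unfold g2.
  assert (hz : 0 < y/(y-1)) by (apply Rdiv_lt_0_compat; lra).
  assert (H := ln_le_sub1 _ hz).
  replace (y / (y-1) - 1) with (/(y-1)) in H by (field; lra).
  replace (ln (y / (y - 1)) / (x - y)) with (- (ln (y / (y - 1)) / (y - x))) by (field; lra).
  assert (ln (y / (y - 1)) / (y - x) <= 2/((y-1)*(y-1))); [|lra].
  apply div_le; [lra|].
  replace (2 / ((y - 1) * (y - 1)) * (y - x)) with (/(y-1) * (2*(y-x)/(y-1))) by (field; lra).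
  assert (1 <= 2*(y-x)/(y-1)).
  { apply div_ge; lra. }
  assert (0 < /(y-1)) by (apply Rinv_0_lt_compat; lra).
  set (q := 2 * (y - x) / (y - 1)) in *. set (r := /(y-1)) in *.
  assert (r <= r * q) by (rewrite <- (Rmult_1_r r) at 1; apply Rmult_le_compat_l; lra). lra.
Qed.

Lemma B2b x y : 1 < x -> 2*x+1 <= y -> g2 x y <= 0.
Proof.
  intros hx hy. unfold g2.
  assert (hz : 0 < y/(y-1)) by (apply Rdiv_lt_0_compat; lra).
  assert (H := ln_ge_1 _ hz).
  replace (1 - / (y / (y-1))) with (/y) in H by (field; lra).
  assert (0 < / y) by (apply Rinv_0_lt_compat; lra).
  replace (ln (y / (y - 1)) / (x - y)) with (- (ln (y / (y - 1)) / (y - x))) by (field; lra).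
  assert (0 <= ln (y / (y - 1)) / (y - x)); [apply div_ge; lra | lra].
Qed.

Definition h x := trunc_kernel H_chi01 x (x+1).

Lemma h1 x y : 1 < x -> y < -1 -> h x y = g1 x y.
Proof.
  intros hx hy. unfold h, trunc_kernel, H_chi01, g1.
  destruct (Rle_dec _ _) as [H|H].
  - rewrite Rabs_right in H; lra.
  - rewrite (Rabs_left y) by lra. rewrite (Rabs_left (y-1)) by lra.
    replace (- (y - 1)) with (1 - y) by ring. reflexivity.
Qed.

Lemma h2 x y : 1 < x -> 2*x+1 < y -> h x y = g2 x y.
Proof.
  intros hx hy. unfold h, trunc_kernel, H_chi01, g2.
  destruct (Rle_dec _ _) as [H|H].
  - rewrite Rabs_left in H; lra.
  - rewrite (Rabs_right y) by lra. rewrite (Rabs_right (y-1)) by lra. reflexivity.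
Qed.

Lemma h0 x y : 1 < x -> -1 < y < 2*x+1 -> h x y = 0.
Proof.
  intros hx hy. unfold h, trunc_kernel.
  destruct (Rle_dec _ _) as [H|H]; auto.
  exfalso; apply H. unfold Rabs; destruct (Rcase_abs _); lra.
Qed.

Lemma hbound x y : 1 < x -> Rabs (h x y) <= 1.
Proof.
  intros hx.
  destruct (Rlt_dec y (-1)) as [ha|ha].
  - rewrite h1 by lra. assert (A1 := B1a x y hx ltac:(lra)). assert (A2 := B1d x y hx ltac:(lra)).
    assert (-1 <= -1/(y*y)). { assert (1/(y*y) <= 1); [|lra]. apply div_le; nra. }
    rewrite Rabs_left1; lra.
  - destruct (Rlt_dec (2*x+1) y) as [hb|hb].
    + rewrite h2 by lra. assert (A1 := B2a x y hx ltac:(lra)). assert (A2 := B2b x y hx ltac:(lra)).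
      assert (-1 <= -2/((y-1)*(y-1))). { assert (2/((y-1)*(y-1)) <= 1); [|lra]. apply div_le; nra. }
      rewrite Rabs_left1; lra.
    + destruct (Req_dec y (-1)) as [->|n1].
      { unfold h, trunc_kernel. destruct (Rle_dec _ _). rewrite Rabs_R0; lra.
        exfalso. apply n. rewrite Rabs_right; lra. }
      destruct (Req_dec y (2*x+1)) as [->|n2].
      { unfold h, trunc_kernel. destruct (Rle_dec _ _). rewrite Rabs_R0; lra.
        exfalso. apply n. rewrite Rabs_left; lra. }
      rewrite h0 by lra. rewrite Rabs_R0; lra.
Qed.

Lemma g1_cont x z : 1 < x -> z <= -1 -> continuous (g1 x) z.
Proof.
  intros hx hz. apply (@ex_derive_continuous R_AbsRing R_NormedModule). unfold g1.
  auto_derive. repeat split; try lra.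
  apply Rdiv_lt_0_compat; lra.
Qed.

Lemma g2_cont x z : 1 < x -> 2*x+1 <= z -> continuous (g2 x) z.
Proof.
  intros hx hz. apply (@ex_derive_continuous R_AbsRing R_NormedModule). unfold g2.
  auto_derive. repeat split; try lra.
  apply Rdiv_lt_0_compat; lra.
Qed.

Lemma ex_hL x a b : 1 < x -> a <= b <= -1 -> ex_RInt (h x) a b.
Proof.
  intros hx hab. apply ex_RInt_ext with (g1 x).
  - intros z hz. rewrite Rmin_left in hz by lra. rewrite Rmax_right in hz by lra.
    rewrite h1; auto; lra.
  - apply (@ex_RInt_continuous R_CompleteNormedModule). intros z hz. rewrite Rmin_left in hz by lra. rewrite Rmax_right in hz by lra.
    apply g1_cont; lra.
Qed.

Lemma ex_hR x a b : 1 < x -> 2*x+1 <= a <= b -> ex_RInt (h x) a b.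
Proof.
  intros hx hab. apply ex_RInt_ext with (g2 x).
  - intros z hz. rewrite Rmin_left in hz by lra. rewrite Rmax_right in hz by lra.
    rewrite h2; auto; lra.
  - apply (@ex_RInt_continuous R_CompleteNormedModule). intros z hz. rewrite Rmin_left in hz by lra. rewrite Rmax_right in hz by lra.
    apply g2_cont; lra.
Qed.

Lemma RInt0 a b : RInt (fun _ => 0) a b = 0.
Proof. rewrite RInt_const. unfold scal; simpl. unfold mult; simpl. ring. Qed.

Lemma ex_hM x : 1 < x -> ex_RInt (h x) (-1) (2*x+1) /\ RInt (h x) (-1) (2*x+1) = 0.
Proof.
  intros hx. split.
  - apply ex_RInt_ext with (fun _ => 0).
    + intros z hz. rewrite Rmin_left in hz by lra. rewrite Rmax_right in hz by lra.
      rewrite h0; auto.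
    + apply ex_RInt_const.
  - rewrite <- (RInt0 (-1) (2*x+1)). apply RInt_ext.
    intros z hz. rewrite Rmin_left in hz by lra. rewrite Rmax_right in hz by lra.
    rewrite h0; auto.
Qed.

Lemma hL_le0 x a b : 1 < x -> a <= b <= -1 -> RInt (h x) a b <= 0.
Proof.
  intros hx hab. rewrite <- (RInt0 a b). apply RInt_le; try lra.
  apply ex_hL; lra. apply ex_RInt_const.
  intros z hz. rewrite h1 by lra. apply B1d; lra.
Qed.

Lemma hR_le0 x a b : 1 < x -> 2*x+1 <= a <= b -> RInt (h x) a b <= 0.
Proof.
  intros hx hab. rewrite <- (RInt0 a b). apply RInt_le; try lra.
  apply ex_hR; lra. apply ex_RInt_const.
  intros z hz. rewrite h2 by lra. apply B2b; lra.
Qed.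

Lemma isL a : a <= -1 -> is_RInt (fun y => -1/(y*y)) a (-1) (/(-1) - /a).
Proof.
  intros ha.
  assert (H : is_RInt (fun y => -1/(y*y)) a (-1) (minus (Rinv (-1)) (Rinv a))).
  { apply (is_RInt_derive Rinv). 
    - intros z hz. rewrite Rmin_left in hz by lra. rewrite Rmax_right in hz by lra.
      auto_derive. lra. field. lra.
    - intros z hz. rewrite Rmin_left in hz by lra. rewrite Rmax_right in hz by lra.
      apply (@ex_derive_continuous R_AbsRing R_NormedModule). auto_derive. nra. }
  exact H.
Qed.

Lemma isR x b : 1 < x -> 2*x+1 <= b -> is_RInt (fun y => -2/((y-1)*(y-1))) (2*x+1) b (2/(b-1) - 2/(2*x+1-1)).
Proof.
  intros hx hb.
  assert (H : is_RInt (fun y => -2/((y-1)*(y-1))) (2*x+1) b (minus ((fun y => 2/(y-1)) b) ((fun y => 2/(y-1)) (2*x+1)))).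
  { apply (is_RInt_derive (fun y => 2/(y-1))). 
    - intros z hz. rewrite Rmin_left in hz by lra. rewrite Rmax_right in hz by lra.
      auto_derive. lra. field. lra.
    - intros z hz. rewrite Rmin_left in hz by lra. rewrite Rmax_right in hz by lra.
      apply (@ex_derive_continuous R_AbsRing R_NormedModule). auto_derive. nra. }
  exact H.
Qed.

Lemma isU x : 1 < x -> is_RInt (fun y => / (4*x*y)) (-x) (-1) (- ln x / (4*x)).
Proof.
  intros hx.
  assert (H : is_RInt (fun y => / (4*x*y)) (-x) (-1) (minus ((fun y => ln (-y) / (4*x)) (-1)) ((fun y => ln (-y) / (4*x)) (-x)))).
  { apply (is_RInt_derive (fun y => ln (-y) / (4*x))). 
    - intros z hz. rewrite Rmin_left in hz by lra. rewrite Rmax_right in hz by lra.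
      auto_derive. lra. field. lra.
    - intros z hz. rewrite Rmin_left in hz by lra. rewrite Rmax_right in hz by lra.
      apply (@ex_derive_continuous R_AbsRing R_NormedModule). auto_derive. nra. }
  replace (- ln x / (4*x)) with (minus ((fun y => ln (-y) / (4*x)) (-1)) ((fun y => ln (-y) / (4*x)) (-x))).
  exact H.
  simpl. unfold minus, plus, opp; simpl. replace (- -1) with 1 by ring. replace (- - x) with x by ring.
  rewrite ln_1. field. lra.
Qed.

Lemma hL_ge x a : 1 < x -> a <= -1 -> -1 <= RInt (h x) a (-1).
Proof.
  intros hx ha.
  assert (-1 <= RInt (fun y => -1/(y*y)) a (-1)).
  { rewrite (is_RInt_unique _ _ _ _ (isL a ha)).
    assert (/a < 0) by (apply Rinv_lt_0_compat; lra).
    replace (/(-1)) with (-1) by field. lra. }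
  eapply Rle_trans; [exact H|]. apply RInt_le; try lra.
  eexists; apply isL; lra. apply ex_hL; lra.
  intros z hz. rewrite h1 by lra. apply B1a; lra.
Qed.

Lemma hR_ge x b : 1 < x -> 2*x+1 <= b -> -1 <= RInt (h x) (2*x+1) b.
Proof.
  intros hx hb.
  assert (-1 <= RInt (fun y => -2/((y-1)*(y-1))) (2*x+1) b).
  { rewrite (is_RInt_unique _ _ _ _ (isR x b hx hb)).
    assert (0 <= 2/(b-1)) by (apply Rdiv_le_0_compat; lra).
    assert (2/(2*x+1-1) <= 1) by (apply div_le; lra). lra. }
  eapply Rle_trans; [exact H|]. apply RInt_le; try lra.
  eexists; apply isR; lra. apply ex_hR; lra.
  intros z hz. rewrite h2 by lra. apply B2a; lra.
Qed.

Lemma hL_up x : 1 < x -> RInt (h x) (-x) (-1) <= - ln x / (4*x).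
Proof.
  intros hx. rewrite <- (is_RInt_unique _ _ _ _ (isU x hx)).
  apply RInt_le; try lra. apply ex_hL; lra. eexists; apply isU; lra.
  intros z hz. rewrite h1 by lra. apply B1c; lra.
Qed.

Lemma splitL x a : 1 < x -> a <= -x ->
  RInt (h x) a (-1) = RInt (h x) a (-x) + RInt (h x) (-x) (-1).
Proof.
  intros hx ha. rewrite <- (RInt_Chasles (h x) a (-x) (-1)). reflexivity.
  apply ex_hL; lra. apply ex_hL; lra.
Qed.

Lemma decomp x a b : 1 < x -> a <= -x -> 2*x+1 <= b ->
  ex_RInt (h x) a b /\ RInt (h x) a b = RInt (h x) a (-1) + RInt (h x) (2*x+1) b.
Proof.
  intros hx ha hb. destruct (ex_hM x hx) as [eM iM].
  assert (e1 : ex_RInt (h x) a (-1)) by (apply ex_hL; lra).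
  assert (e2 : ex_RInt (h x) (2*x+1) b) by (apply ex_hR; lra).
  assert (e12 : ex_RInt (h x) a (2*x+1)) by (eapply ex_RInt_Chasles; eauto).
  split. eapply ex_RInt_Chasles; eauto.
  rewrite <- (RInt_Chasles (h x) a (2*x+1) b) by auto.
  rewrite <- (RInt_Chasles (h x) a (-1) (2*x+1)) by auto.
  rewrite iM. unfold plus; simpl. ring.
Qed.

Lemma step x N : 1 < x -> 2*x+1 <= N ->
  RInt (h x) (-(N+1)) (N+1) <= RInt (h x) (-N) N.
Proof.
  intros hx hN.
  destruct (decomp x (-N) N hx ltac:(lra) hN) as [e _].
  assert (ea : ex_RInt (h x) (-(N+1)) (-N)) by (apply ex_hL; lra).
  assert (eb : ex_RInt (h x) N (N+1)) by (apply ex_hR; lra).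
  rewrite <- (RInt_Chasles (h x) (-(N+1)) (-N) (N+1)); auto.
  2: eapply ex_RInt_Chasles; eauto.
  rewrite <- (RInt_Chasles (h x) (-N) N (N+1)); auto.
  unfold plus; simpl.
  assert (RInt (h x) (- (N + 1)) (- N) <= 0) by (apply hL_le0; lra).
  assert (RInt (h x) N (N+1) <= 0) by (apply hR_le0; lra). lra.
Qed.

Lemma lowb x N : 1 < x -> 2*x+1 <= N -> -2 <= RInt (h x) (-N) N.
Proof.
  intros hx hN. destruct (decomp x (-N) N hx ltac:(lra) hN) as [_ ->].
  assert (H1 := hL_ge x (-N) hx ltac:(lra)). assert (H2 := hR_ge x N hx hN). lra.
Qed.

Lemma upb x N : 1 < x -> 2*x+1 <= N -> RInt (h x) (-N) N <= - ln x / (4*x).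
Proof.
  intros hx hN. destruct (decomp x (-N) N hx ltac:(lra) hN) as [_ ->].
  rewrite splitL by lra.
  assert (H1 := hL_up x hx). assert (RInt (h x) (- N) (- x) <= 0) by (apply hL_le0; lra).
  assert (RInt (h x) (2 * x + 1) N <= 0) by (apply hR_le0; lra). lra.
Qed.

Lemma clamp_id x N y : 1 < x -> 1 <= N -> clampR N (h x y) = h x y.
Proof.
  intros hx hN. assert (H := hbound x y hx). unfold clampR.
  apply Rabs_le_between in H.
  rewrite Rmin_right by lra. rewrite Rmax_right by lra. reflexivity.
Qed.

Theorem mainTheorem8 :
  exists m C : R, 1 < m /\ 0 < C /\
    forall x : R, m < x -> Hstar_ge H_chi01 x (C * (ln x / x)).
Proof.
  exists 2, (1/4). split; [lra|]. split; [lra|].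
  intros x hx M HM. assert (hx1 : 1 < x) by lra.
  destruct (nfloor_ex (2*x+2) ltac:(lra)) as [n0 Hn0].
  set (N0 := S n0).
  assert (HN0 : 2*x+2 <= INR N0) by (unfold N0; rewrite S_INR; lra).
  assert (Hge : forall N, (N0 <= N)%nat -> 2*x+1 <= INR N).
  { intros N hN. apply le_INR in hN. lra. }
  set (u := fun n => RInt (h x) (- INR (n + N0)) (INR (n + N0))).
  assert (hdec : forall n, u (S n) <= u n).
  { intros n. unfold u. replace (S n + N0)%nat with (S (n + N0)) by lia.
    rewrite S_INR. apply step; auto. apply Hge; lia. }
  assert (hlow : forall n, -2 <= u n).
  { intros n. apply lowb; auto. apply Hge; lia. }
  destruct (ex_finite_lim_seq_decr u (-2) hdec hlow) as [l Hl].
  assert (hup : l <= - ln x / (4*x)).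
  { assert (H := is_lim_seq_le u (fun _ => - ln x / (4*x)) l (- ln x / (4*x))).
    apply H; auto. intros n. apply upb; auto. apply Hge; lia.
    apply is_lim_seq_const. }
  assert (hint : line_int (trunc_kernel H_chi01 x (x+1)) l).
  { exists N0. split.
    - intros N hN. assert (hN' := Hge N hN). constructor. apply ex_RInt_Reals_0.
      apply ex_RInt_ext with (h x).
      + intros y _. symmetry. apply clamp_id; lra.
      + apply (decomp x (- INR N) (INR N)); lra.
    - intros eta heta.
      apply is_lim_seq_spec in Hl.
      destruct (Hl (mkposreal eta heta)) as [N1 HN1].
      exists (N1 + N0)%nat. intros N hN pr.
      rewrite <- RInt_Reals.
      rewrite (RInt_ext _ (h x)).
      + replace N with ((N - N0) + N0)%nat by lia.
        apply (HN1 (N - N0)%nat). lia.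
      + intros y _. apply clamp_id; auto. assert (Hg := Hge N ltac:(lia)). lra. }
  assert (HA := HM (x+1) l ltac:(lra) hint).
  assert (Rabs l >= - l) by (unfold Rabs; destruct (Rcase_abs l); lra).
  replace (1/4 * (ln x / x)) with (- (- ln x / (4*x))) by (field; lra). lra.
Qed.
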